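(* For every $T\in\mathrm{SSYT}_n$, \[ \mathsf P(\mathsf D(T))=\Phi_T(Y)\cdot\varphi_T(Y). \]
   Context: $\mathrm{SSYT}_n$: semistandard Young tableaux with entries in $[n]$, identified with their column sequences $(C_1,\dots,C_\ell)$, $C_j$ the set of entries of column $j$, $T_{ij}$ the entry in row $i$, column $j$. For cells $(i,j),(i,j+1)$ both in $T$, $\mathrm{Leg}^+_T(i,j)=C_j\cap\{T_{ij},\dots,T_{i,j+1}\}$ if $T_{i,j+1}\notin C_j$, else $\varnothing$; $\Phi_T(Y)=\prod_{\mathrm{Leg}^+_T(i,j)\neq\varnothing}(1-Y^{\#\mathrm{Leg}^+_T(i,j)})$. Dyck words: finite words in letters $\mathbf 0,\mathbf 1$ with equally many of each and no prefix containing more $\mathbf 1$s than $\mathbf 0$s. For a two-column tableau $(C_1,C_2)$ put $\bar C_1=C_1\setminus C_2$, $\bar C_2=C_2\setminus C_1$, $a=\#\bar C_1\ge b=\#\bar C_2$; $\mathsf D((C_1,C_2))$ is obtained by listing the elements of $\bar C_1\cup\bar C_2$ in increasing order, replacing each element of $\bar C_1$ by $\mathbf 0$ and each element of $\bar C_2$ by $\mathbf 1$, and appending $a-b$ further letters $\mathbf 1$. For $T=(C_1,\dots,C_\ell)$, $\mathsf D(T)$ is the concatenation $\mathsf D((C_1,C_2))\mathsf D((C_2,C_3))\cdots\mathsf D((C_{\ell-1},C_\ell))$ (empty if $\ell\le1$). Write $[\![0]\!]=1$, $[\![m]\!]=1-Y^m$ and $[\![m]\!]!=\prod_{j=1}^m[\![j]\!]$.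 A Dyck word is uniquely $w=\mathbf 0^{\ell_1}\mathbf 1^{m_1}\cdots\mathbf 0^{\ell_r}\mathbf 1^{m_r}$ with $r\ge0$, $\ell_i,m_i\ge1$; set $b_k=\sum_{i\le k}(\ell_i-m_i)$ and $t_k=m_k+b_k$, and $\mathsf P(w)=\prod_{k=1}^r\frac{[\![t_k]\!]!}{[\![b_k]\!]!}\in\mathbb Z[Y]$. The phantom factor is $\varphi_T(Y)=\prod_{s=1}^{\ell-1}[\![\#C_s-\#C_{s+1}]\!]!$. *)

(* Defs.v *)
From HB Require Import structures.
From mathcomp Require Import all_boot all_order all_algebra.
Set Implicit Arguments. Unset Strict Implicit. Unset Printing Implicit Defensive.
Import Order.TTheory GRing.Theory Num.Theory.
Local Open Scope ring_scope.

(* A tableau is given by its column sequence (C_1,...,C_l); each column is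
   listed top-to-bottom, i.e. as a strictly increasing sequence of entries.
   Cell (i,j) (0-indexed) holds nth 0 C_j i. *)
Definition tableau := seq (seq nat).

Definition adj_cols (C D : seq nat) : bool :=
  (size D <= size C)%N && all (fun i => nth 0 C i <= nth 0 D i)%N (iota 0 (size D)).

Definition is_SSYT (n : nat) (T : tableau) : bool :=
  all (fun C => [&& C != [::], sorted ltn C & all (fun x => 0 < x <= n)%N C]) T
  && sorted adj_cols T.

Definition col_pairs (T : tableau) : seq (seq nat * seq nat) := zip T (behead T).

Definition qint (m : nat) : {poly int} := if m == 0%N then 1 else 1 - 'X^m.
Definition qfact (m : nat) : {poly int} := \prod_(1 <= j < m.+1) qint j.

Definition leg_plus (C D : seq nat) (i : nat) : seq nat :=
  if nth 0 D i \in C then [::]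
  else [seq x <- C | (nth 0 C i <= x <= nth 0 D i)%N].

Definition PhiT (T : tableau) : {poly int} :=
  \prod_(p <- col_pairs T) \prod_(i < size p.2)
     (if leg_plus p.1 p.2 i != [::] then 1 - 'X^(size (leg_plus p.1 p.2 i)) else 1).

Definition phantom_factor (T : tableau) : {poly int} :=
  \prod_(p <- col_pairs T) qfact (size p.1 - size p.2).

(* Letters: false = 0, true = 1. *)
Definition Dpair (C1 C2 : seq nat) : seq bool :=
  let B1 := [seq x <- C1 | x \notin C2] in
  let B2 := [seq x <- C2 | x \notin C1] in
  [seq (x \in B2) | x <- sort leq (B1 ++ B2)] ++ nseq (size B1 - size B2) true.

Definition DT (T : tableau) : seq bool :=
  flatten [seq Dpair p.1 p.2 | p <- col_pairs T].

Fixpoint rle (w : seq bool) : seq (bool * nat) :=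
  match w with
  | [::] => [::]
  | x :: w' =>
      match rle w' with
      | (y, k) :: r => if x == y then (y, k.+1) :: r else (x, 1%N) :: (y, k) :: r
      | [::] => [:: (x, 1%N)]
      end
  end.

(* Given w = 0^{l_1} 1^{m_1} ... 0^{l_r} 1^{m_r}, with b_0 = 0,
   b_k = b_{k-1} + l_k - m_k and t_k = m_k + b_k (= b_{k-1} + l_k), the factor
   [[t_k]]!/[[b_k]]! is written out as the exact quotient
   \prod_(b_k < j <= t_k) [[j]]. *)
Fixpoint Paux (b : nat) (rs : seq (bool * nat)) : {poly int} :=
  match rs with
  | (false, l) :: (true, m) :: rs' =>
      let b' := (b + l - m)%N in
      let t := (m + b')%N in
      (\prod_(b'.+1 <= j < t.+1) qint j) * Paux b' rs'
  | _ => 1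
  end.

Definition Pw (w : seq bool) : {poly int} := Paux 0 (rle w).

(* Main.v *)
Require Import Defs.
From HB Require Import structures.
From mathcomp Require Import all_boot all_order all_algebra.
From mathcomp Require Import zify.
Import GRing.Theory.
Local Open Scope ring_scope.



Fixpoint Fw (h : nat) (w : seq bool) : {poly int} :=
  match w with
  | [::] => 1
  | false :: w' => Fw h.+1 w'
  | true :: w' => qint h * Fw h.-1 w'
  end.
Fixpoint ballot (h : nat) (w : seq bool) : bool :=
  match w with
  | [::] => true
  | false :: w' => ballot h.+1 w'
  | true :: w' => (0 < h)%N && ballot h.-1 w'
  end.
Fixpoint hgt (h : nat) (w : seq bool) : nat :=
  match w with
  | [::] => h
  | false :: w' => hgt h.+1 w'
  | true :: w' => hgt h.-1 w'
  end.

Lemma Fw_cat h w1 w2 : Fw h (w1 ++ w2) = Fw h w1 * Fw (hgt h w1) w2.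
Proof.
elim: w1 h => [|[] w1 IH] h /=; first by rewrite mul1r.
  by rewrite IH mulrA.
by rewrite IH.
Qed.
Lemma ballot_cat h w1 w2 : ballot h (w1 ++ w2) = ballot h w1 && ballot (hgt h w1) w2.
Proof. by elim: w1 h => [|[] w1 IH] h //=; rewrite IH andbA. Qed.
Lemma hgt_cat h w1 w2 : hgt h (w1 ++ w2) = hgt (hgt h w1) w2.
Proof. by elim: w1 h => [|[] w1 IH] h //=. Qed.

Lemma flatten_props (ws : seq (seq bool)) :
  all (fun w => ballot 0 w && (hgt 0 w == 0%N)) ws ->
  [/\ ballot 0 (flatten ws), hgt 0 (flatten ws) = 0%N &
      Fw 0 (flatten ws) = \prod_(w <- ws) Fw 0 w].
Proof.
elim: ws => [|w ws IH] /=; first by rewrite big_nil.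
case/andP=> /andP[bw /eqP hw] /IH [b h f].
by rewrite ballot_cat Fw_cat hgt_cat hw bw b h f big_cons.
Qed.

Lemma rle_head (r : seq bool) : match r with [::] => rle r = [::]
  | y :: _ => exists k rs, rle r = (y, k) :: rs end.
Proof.
elim: r => [|x r IH] //=.
case: r IH => [|y r]; first by exists 1%N, [::].
case=> k [rs Hr]; rewrite -/(rle (y :: r)) Hr; case: eqP => [->|_]; by eauto.
Qed.

Lemma rle_cons (x : bool) w : rle (x :: w) = match rle w with
      | (y, k) :: r => if x == y then (y, k.+1) :: r else (x, 1%N) :: (y, k) :: r
      | [::] => [:: (x, 1%N)]
      end.
Proof. by []. Qed.

Lemma rle_nseq (x : bool) l (r : seq bool) : ohead r != Some x ->
  rle (nseq l.+1 x ++ r) = (x, l.+1) :: rle r.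
Proof.
move=> hr; elim: l => [|l IH].
  have := rle_head r; case: r hr => [|y r] hy; first by move=> ->.
  case=> k [rs Hr]; rewrite [_ ++ _]/= rle_cons Hr.
  case: (eqVneq x y) hy => [->|ne] hy; first by rewrite eqxx in hy.
  by [].
rewrite -[nseq _ _ ++ r]/(x :: (nseq l.+1 x ++ r)).
by rewrite rle_cons IH eqxx.
Qed.

Lemma split_run (x : bool) w : exists l r, w = nseq l x ++ r /\ ohead r != Some x.
Proof.
elim: w => [|y w [l [r [-> hr]]]]; first by exists 0%N, [::].
case: (eqVneq y x) => [->|ne]; first by exists l.+1, r.
by exists 0%N, (y :: nseq l x ++ r); split => //=; apply/negP => /eqP [] /eqP; rewrite (negbTE ne).
Qed.

Lemma Fw_false h l r : Fw h (nseq l false ++ r) = Fw (h + l) r.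
Proof. by elim: l h => [|l IH] h /=; rewrite ?addn0 ?IH ?addnS. Qed.
Lemma ballot_false h l r : ballot h (nseq l false ++ r) = ballot (h + l) r.
Proof. by elim: l h => [|l IH] h /=; rewrite ?addn0 ?IH ?addnS. Qed.

Lemma Fw_true h m r : (m <= h)%N -> Fw h (nseq m true ++ r) =
  (\prod_((h - m).+1 <= j < h.+1) qint j) * Fw (h - m) r.
Proof.
elim: m h => [|m IH] h hm /=; first by rewrite subn0 big_geq ?mul1r.
case: h hm => [|h] hm //=.
rewrite subSS IH; last by lia.
rewrite [in RHS]big_nat_recr /=; last by lia.
by rewrite mulrA [qint _ * _]mulrC.
Qed.
Lemma ballot_true h m r : ballot h (nseq m true ++ r) = (m <= h)%N && ballot (h - m) r.
Proof.
elim: m h => [|m IH] h /=; first by rewrite subn0.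
rewrite IH; case: h => [|h] //=; by rewrite subSS.
Qed.

Lemma Paux_Fw k w b : (size w <= k)%N -> ballot b w -> ohead w != Some true ->
  Paux b (rle w) = Fw b w.
Proof.
elim: k w b => [|k IH] w b.
  by case: w.
have [l [r [-> hr]]] := split_run false w.
case: l hr => [|l] hr.
  by case: r hr => [|[] r] //=.
move=> hs hb _.
rewrite rle_nseq // Fw_false.
move: hb; rewrite ballot_false.
case: r hr hs => [|[] r] // hr hs hb.

have [m [r2 [er hr2]]] := split_run true (true :: r).
case: m er hr2 => [|m] er hr2; first by move: er hr2 => /= <-.
move: hb; rewrite er ballot_true => /andP[hm hb2].
rewrite rle_nseq // Fw_true // [Paux _ _]/=.
have -> : (m.+1 + (b + l.+1 - m.+1)).+1 = (b + l.+1).+1 by lia.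
rewrite IH //.
move: hs; rewrite er !size_cat !size_nseq /=. lia.
Qed.



Definition cu (p : pred nat) s y := count (fun z => ~~ p z && (z <= y)%N) s.
Definition cv (p : pred nat) s y := count (fun z => p z && (z < y)%N) s.

Lemma count0_all (a : pred nat) s : all (fun z => ~~ a z) s -> count a s = 0%N.
Proof. by elim: s => //= z s IH /andP[/negbTE -> /IH ->]. Qed.

Lemma gen (p : pred nat) s h : sorted ltn s ->
 (forall y, y \in s -> p y -> (cv p s y < h + cu p s y)%N) ->
 [/\ ballot h (map p s), hgt h (map p s) = (h + count (predC p) s - count p s)%N &
   Fw h (map p s) = \prod_(y <- s | p y) qint (h + cu p s y - cv p s y)].
Proof.
elim: s h => [|x s IH] h.
  by move=> _ _; rewrite /= big_nil addn0 subn0.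
move=> + hyp; rewrite /= (path_sortedE ltn_trans) => /andP[hx ss].
have cux : cu p s x = 0%N.
  apply: count0_all; apply/allP => z /(allP hx) xz; apply/negP => /andP[_]; lia.
have cvx : cv p s x = 0%N.
  apply: count0_all; apply/allP => z /(allP hx) xz; apply/negP => /andP[_]; lia.
have hy y : y \in s -> cu p (x :: s) y = (~~ p x + cu p s y)%N /\
                      cv p (x :: s) y = (p x + cv p s y)%N.
  move=> /(allP hx) xy; rewrite /cu /cv /=.
  have -> : (x <= y)%N by lia.
  by rewrite xy !andbT.
case hpx: (p x).
- have h0 : (0 < h)%N.
    have := hyp x (mem_head _ _) hpx; rewrite /cu /cv /= ?hpx /= ?ltnn.
    by rewrite -/(cu p s x) -/(cv p s x) cux cvx; lia.
  have hyp' : forall y, y \in s -> p y -> (cv p s y < h.-1 + cu p s y)%N.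
    move=> y ys py; have := hyp y; rewrite inE ys orbT => /(_ isT py).
    by case: (hy y ys) => -> ->; rewrite hpx /=; lia.
  have [b1 h1 f1] := IH _ ss hyp'.
  split => /=; first by rewrite h0.
    by rewrite h1; lia.
  rewrite f1 big_cons hpx ltnn cux cvx.
  congr (_ * _); first by congr qint; lia.
  rewrite big_seq_cond [RHS]big_seq_cond; apply: eq_bigr => y /andP[ys _].
  by rewrite (allP hx y ys); congr qint; lia.
- have hyp' : forall y, y \in s -> p y -> (cv p s y < h.+1 + cu p s y)%N.
    move=> y ys py; have := hyp y; rewrite inE ys orbT => /(_ isT py).
    by case: (hy y ys) => -> ->; rewrite hpx /=; lia.
  have [b1 h1 f1] := IH _ ss hyp'.
  split => //=.
    by rewrite h1; lia.
  rewrite f1 big_cons hpx.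
  rewrite big_seq_cond [RHS]big_seq_cond; apply: eq_bigr => y /andP[ys _].
  have xy := allP hx y ys.
  have -> : (x <= y)%N by lia.
  by congr qint; lia.
Qed.



Lemma count_lt_nth s i : sorted ltn s -> (i < size s)%N ->
  count (fun z => z < nth 0 s i)%N s = i.
Proof.
elim: s i => [|x s IH] i //=.
rewrite (path_sortedE ltn_trans) => /andP[hx ss].
case: i => [|i] /= hi.
  rewrite ltnn count0_all //; apply/allP => z /(allP hx) /=; lia.
have xs : (x < nth 0 s i)%N by apply: (allP hx); apply: mem_nth.
by rewrite xs IH.
Qed.

Lemma count_le_nth s i : sorted ltn s -> (i < size s)%N ->
  count (fun z => z <= nth 0 s i)%N s = i.+1.
Proof.
elim: s i => [|x s IH] i //=.
rewrite (path_sortedE ltn_trans) => /andP[hx ss].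
case: i => [|i] /= hi.
  rewrite leqnn count0_all //; apply/allP => z /(allP hx) /=; lia.
have xs : (x < nth 0 s i)%N by apply: (allP hx); apply: mem_nth.
by rewrite ltnW // IH.
Qed.

Lemma count_common (C D : seq nat) (P : pred nat) : uniq C -> uniq D ->
  count (fun z => (z \in D) && P z) C = count (fun z => (z \in C) && P z) D.
Proof.
move=> uC uD.
have e1 : count (fun z => (z \in D) && P z) C = count P [seq z <- C | z \in D].
  by rewrite count_filter; apply: eq_count => z /=; rewrite andbC.
have e2 : count (fun z => (z \in C) && P z) D = count P [seq z <- D | z \in C].
  by rewrite count_filter; apply: eq_count => z /=; rewrite andbC.
rewrite e1 e2; apply/permP; apply: uniq_perm; rewrite ?filter_uniq //.
by move=> z; rewrite !mem_filter andbC.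
Qed.

Lemma count_split (a b : pred nat) s :
  count a s = (count (fun z => a z && b z) s + count (fun z => a z && ~~ b z) s)%N.
Proof. by elim: s => //= z s ->; case: (a z); case: (b z) => /=; lia. Qed.



Ltac clia := repeat match goal with H : _ |- _ => clear H end; lia.

Lemma nseq_true_props k :
  [/\ ballot k (nseq k true), hgt k (nseq k true) = 0%N & Fw k (nseq k true) = qfact k].
Proof.
elim: k => [|k [b h f]] /=; first by rewrite /qfact big_geq.
split => //; rewrite f /qfact [RHS]big_nat_recr //= mulrC; congr (_ * _).
Qed.

Lemma pair_lemma (C D : seq nat) : sorted ltn C -> sorted ltn D -> adj_cols C D ->
  [/\ ballot 0 (Dpair C D), hgt 0 (Dpair C D) = 0%N &
     Fw 0 (Dpair C D) = (\prod_(i < size D) (if leg_plus C D i != [::]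
        then 1 - 'X^(size (leg_plus C D i)) else 1)) * qfact (size C - size D)].
Proof.
move=> sC sD /andP[szDC adj].
have uC : uniq C by move: sC; rewrite ltn_sorted_uniq_leq => /andP[].
have uD : uniq D by move: sD; rewrite ltn_sorted_uniq_leq => /andP[].
set B1 := [seq x <- C | x \notin D].
set B2 := [seq x <- D | x \notin C].
set s := sort leq (B1 ++ B2).
set p := fun x : nat => x \in B2.
have hD : Dpair C D = map p s ++ nseq (size B1 - size B2) true by [].
have memB1 z : (z \in B1) = (z \in C) && (z \notin D) by rewrite mem_filter andbC.
have memB2 z : (z \in B2) = (z \in D) && (z \notin C) by rewrite mem_filter andbC.
have us : uniq (B1 ++ B2).
  rewrite cat_uniq !filter_uniq //= andbT.
  apply/hasPn => z; rewrite memB2 memB1 => /andP[zD zC]; by rewrite (negbTE zC).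
have ss : sorted ltn s.
  by rewrite ltn_sorted_uniq_leq sort_uniq us sort_sorted //; exact: leq_total.
have ps : perm_eq s (B1 ++ B2) by rewrite perm_sort perm_refl.
have key y : y \in B2 ->
  (cu p s y + count (fun z => (z \in C) && (z < y)%N) D = count (fun z => z <= y)%N C)%N /\
  (cv p s y + count (fun z => (z \in C) && (z < y)%N) D = count (fun z => z < y)%N D)%N.
  rewrite memB2 => /andP[yD yC].
  have cc : count (fun z => (z \in C) && (z < y)%N) D =
            count (fun z => (z \in D) && (z <= y)%N) C.
    rewrite [RHS]count_common //; apply: eq_count => z /=.
    case: (eqVneq z y) => [->|zy]; first by rewrite (negbTE yC).
    by rewrite [(z <= y)%N]leq_eqVlt (negbTE zy).
  split.
  - rewrite cc /cu (permP ps) count_cat /B1 /B2 !count_filter.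
    rewrite [X in ((_ + X) + _)%N]count0_all ?addn0; last first.
      apply/allP => z zD /=; rewrite /p memB2 zD /=; by case: (z \notin C); rewrite /= ?andbF.
    rewrite [RHS](count_split _ (fun z => z \in D)) [RHS]addnC.
    congr (_ + _)%N; apply: eq_count => z /=; rewrite /p ?memB2;
      by case: (z \in D); case: (z \in C); case: (z <= y)%N.
  - rewrite /cv (permP ps) count_cat /B1 /B2 !count_filter.
    rewrite [X in ((X + _) + _)%N]count0_all ?add0n; last first.
      apply/allP => z zC /=; rewrite /p memB2 zC /=; by rewrite !andbF.
    rewrite [RHS](count_split _ (fun z => z \notin C)).
    congr (_ + _)%N; apply: eq_in_count => z zD /=; rewrite /p ?memB2 ?zD /=.
      by case: (_ \in C); rewrite /= ?andbT ?andbF.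
    by case: (_ \in C); rewrite /= ?andbT ?andbF.
have ci_le i : (i < size D)%N -> (nth 0 C i <= nth 0 D i)%N /\ (i < size C)%N.
  move=> iD; split; last by move: iD szDC; clia.
  by apply: (allP adj); rewrite mem_iota.
have hle i : (i < size D)%N -> (i < count (fun z => z <= nth 0 D i)%N C)%N.
  move=> iD; have [h1 h2] := ci_le i iD.
  have := count_le_nth _ _ sC h2.
  have : (count (fun z => z <= nth 0 C i)%N C <= count (fun z => z <= nth 0 D i)%N C)%N.
    by apply: sub_count => z /= hz; move: hz h1; clia.
  clia.
have hyp : forall y, y \in s -> p y -> (cv p s y < 0 + cu p s y)%N.
  move=> y _ py; have [k1 k2] := key y py.
  have yD : y \in D by move: py; rewrite /p memB2 => /andP[].
  have iD : (index y D < size D)%N by rewrite index_mem.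
  have := hle _ iD; have := count_lt_nth _ _ sD iD; rewrite nth_index //.
  move: k1 k2; clia.
have [b1 h1 f1] := gen _ _ _ ss hyp.
have cp : count p s = size B2.
  rewrite (permP ps) count_cat count0_all ?add0n; last first.
    by apply/allP => z; rewrite /p memB1 memB2 => /andP[zC zD]; rewrite zC andbF.
  by rewrite -[RHS]count_predT; apply: eq_in_count => z zB /=; rewrite /p zB.
have hk : hgt 0 (map p s) = (size B1 - size B2)%N.
  rewrite h1; have := count_predC p s; rewrite (perm_size ps) size_cat cp; clia.
have sk : (size B1 - size B2 = size C - size D)%N.
  have e := count_common C D xpredT uC uD.
  have e1 : count (fun z => z \in D) C = count (fun z => z \in C) D.
    by rewrite (eq_count (a2 := fun z => (z \in D) && xpredT z)) ?e //;
      [apply: eq_count => z /=; rewrite andbT | move=> z /=; rewrite andbT].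
  rewrite /B1 /B2 !size_filter -(count_predC (fun z => z \in D) C).
  by rewrite -(count_predC (fun z => z \in C) D) e1 subnDl.
have [bn hn fn] := nseq_true_props (size B1 - size B2).
rewrite hD ballot_cat hgt_cat Fw_cat hk b1 bn hn fn sk; split => //.
congr (_ * _).
pose G y := qint (count (fun z => z <= y)%N C - count (fun z => z < y)%N D).
have R : \prod_(y <- s | p y) qint (0 + cu p s y - cv p s y) = \prod_(y <- D | y \notin C) G y.
  rewrite (perm_big _ ps) big_cat /= big1_seq ?mul1r; last first.
    move=> z /andP[]; rewrite /p memB2 memB1 => /andP[zD zC] /andP[zC' zD'].
    by rewrite zC' in zC.
  rewrite /B2 big_filter_cond big_seq_cond [RHS]big_seq_cond.
  apply: eq_big => [y|y /andP[yD /andP[yC py]]].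
    by rewrite /p memB2; case: (_ \in D); case: (_ \in C).
  by have [k1 k2] := key y py; rewrite /G; congr qint; move: k1 k2; clia.
rewrite f1 R -(big_mkord xpredT (fun i => if leg_plus C D i != [::]
   then 1 - 'X^(size (leg_plus C D i)) else 1)) (big_nth 0) big_mkcond /=.
apply: eq_big_nat => i /andP[_ iD].
rewrite /leg_plus.
case: ifPn => yC /=; last by rewrite (negbNE yC) eqxx.
rewrite (negbTE yC).
have [cy iC] := ci_le i iD.
have cl := count_lt_nth _ _ sD iD.
have cc := count_lt_nth _ _ sC iC.
have hl := hle i iD.
set y := nth 0 D i in yC cy cl hl *; set ci := nth 0 C i in cy cc *.
have e : count (fun z => z <= y)%N C =
         (count (fun z => ci <= z <= y)%N C + count (fun z => z < ci)%N C)%N.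
  rewrite (count_split _ (fun z => ci <= z)%N); congr (_ + _)%N; apply: eq_count => z /=.
    by rewrite andbC.
  rewrite -ltnNge; case: (ltnP z ci) => hz; rewrite ?andbF ?andbT //; apply/idP; move: hz cy; clia.
rewrite -size_eq0 size_filter.
have -> : (count (fun z => ci <= z <= y)%N C == 0%N) = false by apply: negbTE; apply/eqP; move: e hl cc; clia.
rewrite /G /qint.
have -> : (count (fun z => z <= y)%N C - count (fun z => z < y)%N D == 0)%N = false.
  by apply: negbTE; apply/eqP; rewrite -/y cl; move: hl; clia.
by rewrite /=; congr (1 - 'X^_); rewrite cl; move: e cc; clia.
Qed.



Lemma pairs_ok (T : seq (seq nat)) : all (fun C => sorted ltn C) T -> sorted adj_cols T ->
  all (fun q => [&& sorted ltn q.1, sorted ltn q.2 & adj_cols q.1 q.2]) (col_pairs T).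
Proof.
elim: T => [|C T IH] //=.
case: T IH => [|D T] IH //= /andP[sC /andP[sD sT]] /andP[aCD pT].
rewrite sC sD aCD /=.
have := IH; rewrite /col_pairs /=; apply => //; by rewrite sD.
Qed.

Theorem mainTheorem12 (n : nat) (T : seq (seq nat)) :
  is_SSYT n T -> Pw (DT T) = (PhiT T * phantom_factor T)%R.
Proof.
move=> /andP[hcols hsort].
have hsl : all (fun C => sorted ltn C) T.
  by apply/allP => C /(allP hcols) /and3P[].
have hp := pairs_ok _ hsl hsort.
rewrite /Pw /DT.
set ws := map (fun p => Dpair p.1 p.2) (col_pairs T).
have hw : all (fun w => ballot 0 w && (hgt 0 w == 0%N)) ws.
  rewrite all_map; apply/allP => q hq /=.
  have /and3P[s1 s2 a] := allP hp q hq.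
  by have [b h _] := pair_lemma _ _ s1 s2 a; rewrite b h.
have [b h f] := flatten_props _ hw.
have hd : ohead (flatten ws) != Some true.
  by move: b; case: (flatten ws) => [|[] w].
rewrite (Paux_Fw _ _ _ (leqnn _) b hd) f big_map /PhiT /phantom_factor -big_split /=.
apply: eq_big_seq => q hq.
have /and3P[s1 s2 a] := allP hp q hq.
by have [_ _ ->] := pair_lemma _ _ s1 s2 a.
Qed.
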